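(* Let $R$ be a ring and let $I,J$ be ideals of $R$ with $I\cap J=0$. Let $x\in I$ and $y\in J$. Then for all $\theta,\theta'\in\widehat\Theta(R)$, $\theta(x)\cdot\theta'(y)=0$.
   Context: Rings are commutative with unit. $\widehat\Theta(R)$ is the free monoid generated by the set $\mathrm{Der}(R)$ of all derivations of $R$; a word $\delta_1\cdots\delta_n$ acts on $R$ as the composition $\delta_1\circ\cdots\circ\delta_n$ (the empty word acting as the identity). *)

(* Defs.v *)
From mathcomp Require Import all_boot all_order all_algebra.
Set Implicit Arguments. Unset Strict Implicit. Unset Printing Implicit Defensive.
Import GRing.Theory.
Local Open Scope ring_scope.

Definition is_derivation (R : comPzRingType) (d : R -> R) : Prop :=
  (forall a b : R, d (a + b) = d a + d b) /\
  (forall a b : R, d (a * b) = a * d b + d a * b).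

Definition Der (R : comPzRingType) := {d : R -> R | is_derivation d}.

(* \widehat\Theta(R): the free monoid on Der(R), i.e. finite words. *)
Definition ThetaHat (R : comPzRingType) := seq (Der R).

(* The word d1 ... dn acts as d1 \o ... \o dn (empty word = identity). *)
Definition theta_act (R : comPzRingType) (w : ThetaHat R) : R -> R :=
  foldr (fun (d : Der R) (f : R -> R) => fun x => proj1_sig d (f x)) id w.

(* An ideal of R (two-sided = one-sided, R commutative). *)
Definition is_ideal (R : comPzRingType) (I : R -> Prop) : Prop :=
  I 0 /\ (forall a b, I a -> I b -> I (a + b)) /\
  (forall r a, I a -> I (r * a)).

(* Main.v *)
Require Import Defs.
From mathcomp Require Import all_boot all_order all_algebra.
Local Open Scope ring_scope.
Import GRing.Theory.

Lemma der0 (R : comPzRingType) (d : Der R) : proj1_sig d 0 = 0.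
Proof.
case: d => f [hA hM] /=.
apply: (@addrI _ (f 0)); by rewrite -hA !addr0.
Qed.

Lemma step (R : comPzRingType) (d : Der R) (u v : R) :
  u * v = 0 -> proj1_sig d u * v = - (u * proj1_sig d v).
Proof.
move=> huv; have := der0 _ d; case: d => f [hA hM] /= h0.
have := hM u v; rewrite huv h0 => /esym /eqP; rewrite addr_eq0 => /eqP ->.
by rewrite opprK.
Qed.

Lemma shift (R : comPzRingType) (I J : R -> Prop) (n : nat)
  (IH : forall (th th' : ThetaHat R) x y, I x -> J y ->
        (size th + size th' < n)%N -> theta_act th x * theta_act th' y = 0) :
  forall (th th' : ThetaHat R) x y, I x -> J y -> (size th + size th' = n)%N ->
  theta_act th x * theta_act th' y =
    (-1) ^+ size th * (x * theta_act (catrev th th') y).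
Proof.
elim=> [|d th1 IH1] th' x y hx hy hs /=; first by rewrite expr0 mul1r.
rewrite (step _ d) ?IH //; last by rewrite -hs addSn.
have := IH1 (d :: th') x y hx hy; rewrite /= addnS -hs addSn => -> //.
by rewrite exprS mulN1r mulNr.
Qed.

Lemma mainL (R : comPzRingType) (n : nat) : forall (I J : R -> Prop),
  is_ideal I -> is_ideal J -> (forall z : R, I z -> J z -> z = 0) ->
  forall (th th' : ThetaHat R) x y, I x -> J y ->
  (size th + size th' < n)%N -> theta_act th x * theta_act th' y = 0.
Proof.
elim: n => [|n IHn] I J hI hJ hIJ th th' x y hx hy; first by [].
rewrite ltnS leq_eqVlt => /orP [/eqP hs|hlt]; last first.
  by apply: (IHn I J hI hJ hIJ th th' x y hx hy hlt).
have IHI := IHn I J hI hJ hIJ.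
have IHJ := IHn J I hJ hI (fun z a b => hIJ z b a).
rewrite (@shift _ I J n IHI) //.
set w := catrev th th'.
have sw : size w = n by rewrite /w catrevE size_cat size_rev.
suff -> : x * theta_act w y = 0 by rewrite mulr0.
apply: hIJ.
  by rewrite mulrC; case: hI => _ [_ H]; apply: H.
have := @shift _ J I n IHJ w [::] y x hy hx.
rewrite /= addn0 sw => /(_ erefl); rewrite mulrC => ->.
case: hJ => _ [_ H]; rewrite mulrCA mulrC; exact: H.
Qed.

Theorem lemmaA14 (R : comPzRingType) (I J : R -> Prop)
  (hI : is_ideal I) (hJ : is_ideal J)
  (hIJ : forall z : R, I z -> J z -> z = 0)
  (x y : R) (hx : I x) (hy : J y) :
  forall theta theta' : ThetaHat R, theta_act theta x * theta_act theta' y = 0.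
Proof.
move=> th th'; exact: (@mainL R (size th + size th').+1 I J hI hJ hIJ th th' x y hx hy (leqnn _)).
Qed.
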